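(* Let $N\ge2$, $M\geq0$, and let $U$ be the vector space with orthonormal basis $e_0,\dots,e_M$. For $n\ge1$ let $\alpha_n$ act on $U$ by $\alpha_ne_k=e_{k-n}$ if $k-n\geq0$ and $0$ otherwise, and let $\alpha_{-n}=\alpha_n^*$ (so $\alpha_{-n}e_k=e_{k+n}$ if $k+n\le M$, else $0$). Let $\mathfrak{W}=\exp\big(\sum_{n<0,N\nmid n}\alpha_n/n\big)\exp\big(\sum_{n>0,N\nmid n}\alpha_n/n\big)$ acting on $U$. Then for all $0\le k,l\le M$, $\langle e_k\,|\,\mathfrak{W}\,|\,e_l\rangle$ equals the coefficient of $x^ky^l$ in $$f(x,y)=\frac{1}{1-xy}\cdot\frac{1-x}{(1-x^N)^{1/N}}\cdot\frac{(1-y^N)^{1/N}}{1-y}.$$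
   Context: Power series are expanded at $x=y=0$ using the binomial series for $(1-x^N)^{\mp1/N}$. *)

(* Defs.v *)
(* Scalars: rat (all quantities involved are rational). *)
From HB Require Import structures.
From mathcomp Require Import all_boot all_order all_algebra.
Set Implicit Arguments. Unset Strict Implicit. Unset Printing Implicit Defensive.
Import Order.TTheory GRing.Theory Num.Theory.
Local Open Scope ring_scope.

(* ---------- Operators on U = span(e_0,...,e_M), as (M+1)x(M+1) matrices ----
   Matrix entry A i j = <e_i | A | e_j>, i.e. column j is the image of e_j. *)

Definition alpha (M n : nat) : 'M[rat]_M.+1 :=
  \matrix_(i, j) (((i + n)%N == j)%:R : rat).

(* alpha_(-n) = adjoint of alpha_n = transpose (real orthonormal basis). *)
Definition alpham (M n : nat) : 'M[rat]_M.+1 := (alpha M n)^T.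

(* sum_{n>0, N does not divide n} alpha_n / n   (alpha_n = 0 for n > M) *)
Definition Splus (N M : nat) : 'M[rat]_M.+1 :=
  \sum_(1 <= n < M.+1 | ~~ (N %| n)%N) (n%:R)^-1 *: alpha M n.

(* sum_{n<0, N does not divide n} alpha_n / n
   = sum_{m>0, N does not divide m} alpha_(-m) / (-m) *)
Definition Sminus (N M : nat) : 'M[rat]_M.+1 :=
  \sum_(1 <= m < M.+1 | ~~ (N %| m)%N) (- (m%:R))^-1 *: alpham M m.

(* Exponential of a matrix A with A^(M+1) = 0 (nilpotent on a space of
   dimension M+1): the exponential series is then the finite sum below. *)
Definition nilexp (M : nat) (A : 'M[rat]_M.+1) : 'M[rat]_M.+1 :=
  \sum_(j < M.+1) (j`!%:R)^-1 *: A ^+ j.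

Definition frakW (N M : nat) : 'M[rat]_M.+1 :=
  nilexp (Sminus N M) *m nilexp (Splus N M).

Definition gbinom (a : rat) (j : nat) : rat :=
  (\prod_(i < j) (a - i%:R)) / (j`!%:R).

Definition ser1 := nat -> rat.

(* (1 - x^N)^a = sum_j binom(a,j) (-1)^j x^(N j)   (binomial series) *)
Definition binser (N : nat) (a : rat) : ser1 :=
  fun m => if (N %| m)%N then gbinom a (m %/ N) * (-1) ^+ (m %/ N) else 0.

Definition mul1 (F G : ser1) : ser1 :=
  fun m => \sum_(i < m.+1) F i * G (m - i)%N.

Definition one_minus_x : ser1 := fun m => if m == 0%N then 1 else if m == 1%N then -1 else 0.
Definition geom1 : ser1 := fun _ => 1.

Definition ser2 := nat -> nat -> rat.

Definition mul2 (F G : ser2) : ser2 :=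
  fun k l => \sum_(i < k.+1) \sum_(j < l.+1) F i j * G (k - i)%N (l - j)%N.

Definition in_x (F : ser1) : ser2 := fun k l => if l == 0%N then F k else 0.
Definition in_y (F : ser1) : ser2 := fun k l => if k == 0%N then F l else 0.

Definition geom_xy : ser2 := fun k l => if k == l then 1 else 0.

Definition fser (N : nat) : ser2 :=
  mul2 geom_xy
    (mul2 (in_x (mul1 one_minus_x (binser N (- (N%:R)^-1))))
          (in_y (mul1 geom1 (binser N ((N%:R)^-1))))).

(* Main.v *)
Require Import Defs.
From HB Require Import structures.
From mathcomp Require Import all_boot all_order all_algebra.
From mathcomp Require Import ring lra zify.
Import Order.TTheory GRing.Theory Num.Theory.
Local Open Scope ring_scope.
Definition lowz (M : nat) (p : {poly rat}) := forall m, (m < M)%N -> p`_m = 0.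

Lemma lowzD M p q : lowz M p -> lowz M q -> lowz M (p + q).
Proof. by move=> hp hq m hm; rewrite coefD hp // hq // addr0. Qed.
Lemma lowzN M p : lowz M p -> lowz M (- p).
Proof. by move=> hp m hm; rewrite coefN hp // oppr0. Qed.
Lemma lowzB M p q : lowz M p -> lowz M q -> lowz M (p - q).
Proof. by move=> hp hq; apply: lowzD => //; apply: lowzN. Qed.
Lemma lowzZ M c p : lowz M p -> lowz M (c *: p).
Proof. by move=> hp m hm; rewrite coefZ hp // mulr0. Qed.
Lemma lowz0 M : lowz M 0.
Proof. by move=> m _; rewrite coef0. Qed.
Lemma lowz_mul a b p q : lowz a p -> lowz b q -> lowz (a + b) (p * q).
Proof.
move=> hp hq m hm; rewrite coefM big1 // => i _.
have [hi|hi] := ltnP i a; first by rewrite hp // mul0r.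
rewrite hq ?mulr0 //; have := ltn_ord i; lia.
Qed.
Lemma lowzMl M p q : lowz M q -> lowz M (p * q).
Proof. move=> hq; rewrite -[M]add0n; apply: lowz_mul => // m; by []. Qed.
Lemma lowzMr M p q : lowz M p -> lowz M (p * q).
Proof. by move=> hq; rewrite mulrC; apply: lowzMl. Qed.
Lemma lowz_exp n q : lowz 1 q -> lowz n (q ^+ n).
Proof.
move=> hq; elim: n => [|n IH]; first by move=> m.
by rewrite exprS -add1n; apply: lowz_mul.
Qed.
Lemma lowzXn n : lowz n ('X^n).
Proof. by move=> m hm; rewrite coefXn; case: eqP => // ?; subst; rewrite ltnn in hm. Qed.
Lemma lowz_le a b p : (a <= b)%N -> lowz b p -> lowz a p.
Proof. move=> hab hp m hm; apply: hp; lia. Qed.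

Definition Epol (M : nat) (q : {poly rat}) : {poly rat} :=
  \sum_(j < M.+1) (j`!%:R)^-1 *: q ^+ j.

Lemma Epol_ode M (q : {poly rat}) : q`_0 = 0 ->
  lowz M ((Epol M q)^`() - q^`() * Epol M q).
Proof.
move=> q0.
have hq : lowz 1 q by move=> m; case: m.
have -> : (Epol M q)^`() = q^`() * \sum_(j < M) (j`!%:R)^-1 *: q ^+ j.
  rewrite /Epol linear_sum big_ord_recl /= derivZ deriv_exp mulr0n scaler0 add0r.
  rewrite mulr_sumr; apply: eq_bigr => j _.
  rewrite derivZ deriv_exp /= /bump /= add1n -mulrnAr -[_ *+ j.+1]scaler_nat -!scalerAr scalerA add0n; congr (_ *: _).
  rewrite factS natrM invfM mulrAC mulVf ?mul1r //.
  by rewrite pnatr_eq0.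
rewrite /Epol big_ord_recr /= mulrDr opprD addrA subrr add0r.
apply: lowzN; rewrite -scalerAr; apply: lowzZ; apply: lowzMl; exact: lowz_exp.
Qed.

Lemma Epol0 M (q : {poly rat}) : q`_0 = 0 -> (Epol M q)`_0 = 1.
Proof.
move=> q0; rewrite /Epol coef_sum big_ord_recl /= expr0 coefZ coef1 /= invr1 mulr1.
rewrite big1 ?addr0 // => j _; rewrite coefZ.
have hq : lowz 1 q by move=> m; case: m.
by rewrite (@lowz_le 1 (bump 0 j) _ _ (lowz_exp _ _ hq)) ?mulr0.
Qed.

Lemma ode_unique M (P E H : {poly rat}) :
  lowz M (E^`() - P * E) -> lowz M (H^`() - P * H) -> E`_0 = H`_0 ->
  forall m, (m <= M)%N -> E`_m = H`_m.
Proof.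
move=> hE hH h0.
set D := E - H.
have hD : lowz M (D^`() - P * D).
  have -> : D^`() - P * D = (E^`() - P * E) - (H^`() - P * H)
    by rewrite /D derivB; ring.
  exact: lowzB.
suff : forall m, (m <= M)%N -> D`_m = 0.
  by move=> hm m lm; apply/eqP; rewrite -subr_eq0 -coefB; apply/eqP; apply: hm.
move=> m; elim: m {-2}m (leqnn m) => [|n IH] m lm lmM.
  by move: lm; rewrite leqn0 => /eqP ->; rewrite /D coefB h0 subrr.
case: m lm lmM => [|m] lm lmM; first by rewrite /D coefB h0 subrr.
have := hD m lmM; rewrite coefB coef_deriv coefM big1; last first.
  by move=> i _; rewrite IH ?mulr0 //; have := ltn_ord i; lia.
rewrite subr0 => /eqP; rewrite mulrn_eq0 /= => /eqP //.
Qed.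

Lemma unit_cancel M (u p : {poly rat}) : u`_0 = 1 -> lowz M (u * p) -> lowz M p.
Proof.
move=> u0 hup m; elim: m {-2}m (leqnn m) => [|n IH] m lm hm.
  have := hup m hm; move: lm; rewrite leqn0 => /eqP ->.
  by rewrite coef0M u0 mul1r.
have := hup m hm; rewrite coefM big_ord_recl /= u0 mul1r subn0 big1 ?addr0 //.
move=> i _; rewrite IH ?mulr0 //; rewrite /bump /=; lia.
Qed.

Lemma geomP n : (1 - 'X) * \sum_(i < n) 'X^i = 1 - 'X^n :> {poly rat}.
Proof.
elim: n => [|n IH]; first by rewrite big_ord0 mulr0 expr0 subrr.
by rewrite big_ord_recr /= mulrDr IH exprS; ring.
Qed.

Lemma gbinomS a q : gbinom a q.+1 * q.+1%:R = gbinom a q * (a - q%:R).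
Proof.
rewrite /gbinom big_ord_recr /= factS natrM invfM.
have h : (q.+1%:R : rat) != 0 by rewrite pnatr_eq0.
field; rewrite [1 + _]addrC natr1 h pnatr_eq0 -lt0n fact_gt0 //.
Qed.

Definition Bt N M a : {poly rat} := \poly_(i < M.+1) binser N a i.

Lemma binser_nd N a j : (0 < j < N)%N -> binser N a j = 0.
Proof.
move=> /andP[j0 jN]; rewrite /binser; case: ifP => // /dvdn_leq.
by move=> /(_ j0); rewrite leqNgt jN.
Qed.

Lemma binser_rec N a j : (0 < N)%N ->
  binser N a (j + N)%N *+ (j + N)%N - binser N a j *+ j + a * N%:R * binser N a j = 0.
Proof.
move=> N0; rewrite /binser dvdn_addl ?dvdnn //.
case: ifP => hj; last by rewrite !mul0rn !mulr0 subrr.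
case/dvdnP: hj => q ->.
have -> : (q * N + N = q.+1 * N)%N by rewrite mulSn addnC.
rewrite !mulnK // exprS -[_ *+ (q.+1 * N)]mulr_natr -[_ *+ (q * N)]mulr_natr !natrM.
have h := gbinomS a q.
transitivity ((-1) ^+ q * N%:R * (- (gbinom a q.+1 * q.+1%:R) - gbinom a q * q%:R + a * gbinom a q)).
  ring.
rewrite h; ring.
Qed.

Lemma bin_ode N M a : (0 < N)%N ->
  lowz M ((1 - 'X^N) * (Bt N M a)^`() + (a * N%:R) *: ('X^(N.-1) * Bt N M a)).
Proof.
case: N => [//|N] _ m hm.
rewrite coefD mulrBl coefB mul1r coefZ !coefXnM !coef_deriv !coef_poly /=.
have -> : (m.+1 < M.+1)%N by lia.
have -> : ((m - N.+1).+1 < M.+1)%N by lia.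
have -> : (m - N < M.+1)%N by lia.
have [mN|mN] := ltnP m N.
  rewrite binser_nd; last by apply/andP; split; lia.
  by rewrite mul0rn (_ : (m < N.+1)%N) ?mulr0 ?subrr //; lia.

have := binser_rec N.+1 a (m - N) (ltn0Sn _).
have -> : (m - N + N.+1 = m.+1)%N by lia.
case: (ltnP m N.+1) => hmN.
  have -> : (m - N = 0)%N by lia.
  by move=> H; rewrite -[RHS]H mulr0n !subr0.
by have -> : ((m - N.+1).+1 = m - N)%N by lia.

Qed.

Lemma sum_nat_pick (a b i : nat) (F : nat -> rat) :
  \sum_(a <= n < b) (if n == i then F n else 0) = if (a <= i < b)%N then F i else 0.
Proof.
elim: b => [|b IH]; first by rewrite big_geq // andbF.
have [ab|ab] := leqP a b; last first.
  rewrite big_geq //; case: ifP => //; lia.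
rewrite big_nat_recr //= IH.
case: (eqVneq b i) => [<-|bi].
  by rewrite ltnn andbF add0r ab ltnSn.
rewrite addr0; congr (if _ then _ else _); apply/idP/idP; move/andP=> [h1 h2];
  apply/andP; split => //; move/eqP: bi; lia.
Qed.

Definition Fp N M : {poly rat} :=
  \sum_(1 <= n < M.+1 | ~~ (N %| n)%N) (n%:R)^-1 *: 'X^n.

Lemma Fp_coef N M i : (Fp N M)`_i =
  if (0 < i < M.+1)%N && ~~ (N %| i)%N then (i%:R)^-1 else 0.
Proof.
rewrite /Fp coef_sum big_mkcond /=.
rewrite (eq_bigr (fun n => if n == i then (if ~~ (N %| n)%N then (n%:R)^-1 else 0) else 0)).
  by rewrite sum_nat_pick; case: (0 < i < M.+1)%N.
move=> n _; rewrite coefZ coefXn eq_sym.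
by case: (N %| n)%N; case: (n == i) => /=; rewrite ?mulr1 ?mulr0.
Qed.

Lemma Fp0 N M : (Fp N M)`_0 = 0.
Proof. by rewrite Fp_coef. Qed.

Lemma dFp_coef N M m : (m < M)%N -> ((Fp N M)^`())`_m = if (N %| m.+1)%N then 0 else 1.
Proof.
move=> hm; rewrite coef_deriv Fp_coef /=; case: (N %| m.+1)%N => /=.
 - by rewrite andbF mul0rn.
 - rewrite andbT (_ : (m.+1 < M.+1)%N) //.
   by rewrite -[_^-1 *+ _]mulr_natr mulVf // pnatr_eq0.
Qed.

Lemma geom_coef n m : (\sum_(i < n) 'X^i : {poly rat})`_m = (m < n)%N%:R.
Proof.
elim: n => [|n IH]; first by rewrite big_ord0 coef0.
rewrite big_ord_recr coefD IH coefXn /=.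
case: (ltngtP m n) => h /=.
- by rewrite addr0 (_ : (m < n.+1)%N) //; lia.
- by rewrite addr0 (_ : (m < n.+1)%N = false) //; lia.
- by rewrite h add0r ltnSn.
Qed.

Lemma Q_fact N M : (2 <= N)%N ->
  lowz M ((1 - 'X^N) * (Fp N M)^`() - \sum_(i < N.-1) 'X^i).
Proof.
move=> N2 m hm.
rewrite mulrBl mul1r !coefB coefXnM geom_coef dFp_coef //.
case: (ltnP m N) => mN.
  rewrite subr0.
  case: (ltnP m N.-1) => mN1.
    rewrite (_ : (N %| m.+1)%N = false) ?subrr //.
    apply/negP => /dvdn_leq; lia.
  have -> : m.+1 = N by lia.
  by rewrite dvdnn subrr.
rewrite dFp_coef; last by lia.
rewrite (_ : (m < N.-1)%N = false); last by lia.
have -> : (m.+1 = (m - N).+1 + N)%N by lia.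
by rewrite dvdn_addl ?dvdnn // subrr subr0.
Qed.

Definition Gt M : {poly rat} := \sum_(i < M.+1) 'X^i.
Definition Hpol N M := Gt M * Bt N M (N%:R^-1).
Definition Dpol N M := (1 - 'X) * Bt N M (- N%:R^-1).

Lemma f1_fact M : lowz M ((1 - 'X) * (Gt M)^`() - Gt M).
Proof.
have := congr1 deriv (geomP M.+1); rewrite derivM derivB derivC derivX sub0r derivB derivC derivXn sub0r.
move=> h.
have -> : (1 - 'X) * (Gt M)^`() - Gt M = - 1 * Gt M + (1 - 'X) * (Gt M)^`() by ring.
rewrite /Gt h; apply: lowzN; rewrite -scaler_nat; apply: lowzZ; exact: lowzXn.
Qed.

Lemma f2_fact M : lowz M ((1 - 'X) * Gt M - 1).
Proof.
rewrite /Gt geomP (_ : 1 - 'X^(M.+1) - 1 = - 'X^(M.+1) :> {poly rat}); last by ring.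
by apply: lowzN; apply: (@lowz_le _ M.+1) => //; apply: lowzXn.
Qed.

Lemma U0 N : (0 < N)%N -> ((1 - 'X) * (1 - 'X^N) : {poly rat})`_0 = 1.
Proof.
move=> N0; rewrite coef0M !coefB coef1 coefX coefXn (eq_sym 0%N N) eqn0Ngt N0 /=; rewrite !mulr0n !subr0 mulr1; apply: mulr1n.
Qed.

Lemma H_ode N M : (2 <= N)%N -> lowz M ((Hpol N M)^`() - (Fp N M)^`() * Hpol N M).
Proof.
move=> hN; have N0 : (0 < N)%N by lia.
apply: (@unit_cancel _ ((1 - 'X) * (1 - 'X^N))); first exact: U0.
have f1 := f1_fact M; have f2 := f2_fact M; have f4 := Q_fact N M hN.
have f3 := bin_ode N M (N%:R^-1) N0.
rewrite mulVf ?pnatr_eq0 -?lt0n // scale1r in f3.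
have g1 := geomP N.-1.
move: f1 f2 f3 f4 g1; rewrite /Hpol.
case: N hN N0 => [//|N'] _ _ /=; rewrite exprS; set XN := 'X^N'.
set G := Gt M; set B := Bt _ M _; set Q := (Fp _ M)^`().
set G1 := \sum_(i < N') _.
move=> f1 f2 f3 f4 g1.
have -> : (1 - 'X) * (1 - 'X * XN) * ((G * B)^`() - Q * (G * B)) =
  (1 - 'X * XN) * B * ((1 - 'X) * G^`() - G) + ((1 - 'X) * G - 1 + 1) * ((1 - 'X * XN) * B^`() + XN * B)
  - G * B * (1 - 'X) * ((1 - 'X * XN) * Q - G1) - G * B * ((1 - 'X) * G1 - (1 - XN)).
  by rewrite derivM; ring.
rewrite g1 subrr mulr0 subr0.
apply: lowzB; last exact: lowzMl.
apply: lowzD; first exact: lowzMl.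
exact: lowzMl.
Qed.

Lemma D_ode N M : (2 <= N)%N -> lowz M ((Dpol N M)^`() - (- Fp N M)^`() * Dpol N M).
Proof.
move=> hN; have N0 : (0 < N)%N by lia.
apply: (@unit_cancel _ ((1 - 'X) * (1 - 'X^N))); first exact: U0.
have f4 := Q_fact N M hN.
have f3 := bin_ode N M (- N%:R^-1) N0.
rewrite mulNr mulVf ?pnatr_eq0 -?lt0n // scaleN1r in f3.
have g1 := geomP N.-1.
move: f3 f4 g1; rewrite /Dpol derivN.
case: N hN N0 => [//|N'] _ _ /=; rewrite exprS; set XN := 'X^N'.
set B := Bt _ M _; set Q := (Fp _ M)^`().
set G1 := \sum_(i < N') _.
move=> f3 f4 g1.
have -> : (1 - 'X) * (1 - 'X * XN) * (((1 - 'X) * B)^`() - - Q * ((1 - 'X) * B)) =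
  (1 - 'X) * (1 - 'X) * ((1 - 'X * XN) * B^`() + - (XN * B))
  + (1 - 'X) * B * (1 - 'X) * ((1 - 'X * XN) * Q - G1) + (1 - 'X) * B * ((1 - 'X) * G1 - (1 - XN)).
  by rewrite derivM derivB derivC derivX; ring.
rewrite g1 subrr mulr0 addr0.
by apply: lowzD; apply: lowzMl.
Qed.

Lemma Bt0 N M a : (Bt N M a)`_0 = 1.
Proof.
rewrite /Bt coef_poly /= /binser dvdn0 div0n expr0 mulr1 /gbinom big_ord0.
by rewrite /= divr1.
Qed.

Lemma Eplus_coef N M m : (2 <= N)%N -> (m <= M)%N ->
  (Epol M (Fp N M))`_m = mul1 geom1 (binser N (N%:R^-1)) m.
Proof.
move=> hN hm.
rewrite (@ode_unique M _ _ _ (Epol_ode M _ (Fp0 N M)) (H_ode N M hN) _ m hm).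
  rewrite /Hpol coefM /mul1; apply: eq_bigr => i _.
  rewrite geom_coef /Bt coef_poly.
  have h1 : (i < M.+1)%N by have := ltn_ord i; lia.
  have h2 : (m - i < M.+1)%N by have := ltn_ord i; lia.
  by rewrite h1 h2 /= mulr1n mul1r.
rewrite Epol0; last exact: Fp0.
by rewrite /Hpol coef0M Bt0 geom_coef mulr1 /= mulr1n.
Qed.

Lemma Eminus_coef N M m : (2 <= N)%N -> (m <= M)%N ->
  (Epol M (- Fp N M))`_m = mul1 one_minus_x (binser N (- N%:R^-1)) m.
Proof.
move=> hN hm.
have h0 : (- Fp N M)`_0 = 0 by rewrite coefN Fp0 oppr0.
rewrite (@ode_unique M _ _ _ (Epol_ode M _ h0) (D_ode N M hN) _ m hm).
  rewrite /Dpol coefM /mul1; apply: eq_bigr => i _.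
  have h2 : (m - i < M.+1)%N by have := ltn_ord i; lia.
  rewrite /Bt coef_poly h2; congr (_ * _).
  rewrite coefB coef1 coefX /one_minus_x.
  case: (nat_of_ord i) => [|[|j]] /=.
  - by rewrite subr0 mulr1n.
  - by rewrite sub0r mulr1n.
  - by rewrite subr0.
rewrite Epol0 // /Dpol coef0M Bt0 mulr1 coefB coef1 coefX /=.
by rewrite subr0 mulr1n.
Qed.

Lemma sum_ord_pick (K t : nat) (F : nat -> rat) :
  \sum_(k < K) (if (k : nat) == t then F k else 0) = if (t < K)%N then F t else 0.
Proof.
by rewrite -(big_mkord xpredT (fun k => if k == t then F k else 0)) sum_nat_pick.
Qed.

Definition Amx M := alpha M 1.

Lemma Apow M i : (Amx M) ^+ i = alpha M i.
Proof.
elim: i => [|i IH].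
  by apply/matrixP => r c; rewrite expr0 !mxE addn0.
apply/matrixP => r c; rewrite exprSr -mulmxE IH !mxE.
rewrite (eq_bigr (fun k : 'I_M.+1 => if (k : nat) == (r + i)%N then ((k + 1)%N == c)%:R else 0)).
  rewrite (sum_ord_pick _ _ (fun k => ((k + 1)%N == c)%:R)); case: ifP => h; first by rewrite addn1 addnS.
  case: eqP => // e; have := ltn_ord c; lia.
move=> k _; rewrite !mxE eq_sym; case: eqP => _; by rewrite ?mul1r ?mul0r.
Qed.

Lemma hornerS M (B : 'M[rat]_M.+1) (p : {poly rat}) :
  horner_mx B p = \sum_(i < size p) p`_i *: B ^+ i.
Proof.
rewrite -{1}[p]coefK poly_def rmorph_sum; apply: eq_bigr => i _.
by rewrite -mul_polyC rmorphM /= horner_mx_C rmorphXn /= horner_mx_X -mulmxE mul_scalar_mx.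
Qed.

Lemma horner_A M p (r c : 'I_M.+1) :
  horner_mx (Amx M) p r c = if (r <= c)%N then p`_(c - r) else 0.
Proof.
rewrite hornerS summxE.
rewrite (eq_bigr (fun i : 'I_(size p) => if (i : nat) == (c - r)%N then (if (r <= c)%N then p`_i else 0) else 0)).
  rewrite (sum_ord_pick _ _ (fun i => if (r <= c)%N then p`_i else 0)); case: ifP => h; case: ifP => // _.
  by rewrite nth_default // leqNgt h.
move=> i _; rewrite !mxE Apow !mxE.
case: (eqVneq (r + i)%N c) => e.
  by rewrite -e addKn eqxx leq_addr mulr1.
rewrite mulr0; case: eqP => // ei; case: ifP => // rc; move/eqP: e; lia.
Qed.

Lemma trpow M (B : 'M[rat]_M.+1) i : (B^T) ^+ i = (B ^+ i)^T.
Proof.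
elim: i => [|i IH]; first by rewrite !expr0 trmx1.
by rewrite exprS IH exprSr -!mulmxE trmx_mul.
Qed.

Lemma horner_AT M p (r c : 'I_M.+1) :
  horner_mx (Amx M)^T p r c = if (c <= r)%N then p`_(r - c) else 0.
Proof.
rewrite hornerS summxE.
rewrite (eq_bigr (fun i : 'I_(size p) => if (i : nat) == (r - c)%N then (if (c <= r)%N then p`_i else 0) else 0)).
  rewrite (sum_ord_pick _ _ (fun i => if (c <= r)%N then p`_i else 0)); case: ifP => h; case: ifP => // _.
  by rewrite nth_default // leqNgt h.
move=> i _; rewrite !mxE trpow Apow !mxE.
case: (eqVneq (c + i)%N r) => e.
  by rewrite -e addKn eqxx leq_addr mulr1.
rewrite mulr0; case: eqP => // ei; case: ifP => // rc; move/eqP: e; lia.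
Qed.

Lemma Splus_eq N M : Splus N M = horner_mx (Amx M) (Fp N M).
Proof.
rewrite /Splus /Fp rmorph_sum; apply: eq_bigr => n _.
by rewrite -mul_polyC rmorphM /= horner_mx_C rmorphXn /= horner_mx_X -mulmxE mul_scalar_mx Apow.
Qed.

Lemma Sminus_eq N M : Sminus N M = horner_mx (Amx M)^T (- Fp N M).
Proof.
rewrite /Sminus /Fp rmorphN rmorph_sum -sumrN; apply: eq_bigr => n _.
by rewrite -mul_polyC rmorphM /= horner_mx_C rmorphXn /= horner_mx_X -mulmxE mul_scalar_mx trpow Apow invrN scaleNr.
Qed.

Lemma nilexp_eq M (B : 'M[rat]_M.+1) q : nilexp (horner_mx B q) = horner_mx B (Epol M q).
Proof.
rewrite /nilexp /Epol rmorph_sum; apply: eq_bigr => j _.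
by rewrite -mul_polyC rmorphM /= horner_mx_C rmorphXn -mulmxE mul_scalar_mx.
Qed.

Lemma inner_sum (X Y : ser1) a b :
  \sum_(i < a.+1) \sum_(j < b.+1) in_x X i j * in_y Y (a - i)%N (b - j)%N = X a * Y b.
Proof.
rewrite big_ord_recr /= big1 ?add0r; last first.
  move=> i _; apply: big1 => j _; rewrite /in_y.
  have -> : (a - i == 0)%N = false by have := ltn_ord i; lia.
  by rewrite mulr0.
rewrite big_ord_recl /= /in_x /in_y subnn subn0 /= big1 ?addr0 // => j _.
by rewrite /bump /= add1n mul0r.
Qed.

Theorem mainTheorem6 (N M : nat) (hN : (2 <= N)%N) (k l : 'I_M.+1) :
  frakW N M k l = fser N k l.
Proof.
rewrite /frakW Splus_eq Sminus_eq !nilexp_eq !mxE.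
rewrite /fser /mul2.
rewrite (eq_bigr (fun i : 'I_k.+1 => if (i < l.+1)%N then
   mul1 one_minus_x (binser N (- N%:R^-1)) (k - i)%N * mul1 geom1 (binser N N%:R^-1) (l - i)%N else 0)); last first.
  move=> i _.
  rewrite (eq_bigr (fun j : 'I_l.+1 => if (j : nat) == i then
     mul1 one_minus_x (binser N (- N%:R^-1)) (k - i)%N * mul1 geom1 (binser N N%:R^-1) (l - j)%N else 0)).
    by rewrite (sum_ord_pick _ _ (fun j => mul1 one_minus_x (binser N (- N%:R^-1)) (k - i)%N * mul1 geom1 (binser N N%:R^-1) (l - j)%N)).
  move=> j _; rewrite inner_sum /geom_xy eq_sym; case: eqP => _; by rewrite ?mul1r ?mul0r.
rewrite (big_ord_widen M.+1 (fun i : nat => if (i < l.+1)%N then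
   mul1 one_minus_x (binser N (- N%:R^-1)) (k - i)%N * mul1 geom1 (binser N N%:R^-1) (l - i)%N else 0) (ltn_ord k)).
rewrite [RHS]big_mkcond /=; apply: eq_bigr => p _.
rewrite horner_AT horner_A.
case: (leqP p k) => pk; case: (leqP p l) => pl;
  rewrite !ltnS ?pk ?pl ?(leqNgt p k) ?(leqNgt p l) ?pk ?pl /= ?mulr0 ?mul0r //.
rewrite Eplus_coef ?Eminus_coef //.
- have := ltn_ord k; lia.
- have := ltn_ord l; lia.
Qed.
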